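(* Let $\mathcal{X}\subseteq\{0,1\}^n$ be nonempty, $\hat c\in\mathbb{R}^n$, $C\in\mathbb{R}^{n\times m}$, and for $\lambda\ge 0$ let $\mathcal{U}(\lambda)=\{\hat c+C\xi:\xi\in\mathbb{R}^m,\ \|\xi\|_2\le\lambda\}$. Let $\Lambda\subseteq\mathbb{R}_{\ge 0}$ and $w:\Lambda\to\mathbb{R}_{\ge0}$ be such that $\int_\Lambda w(\lambda)\,d\lambda$ and $\int_\Lambda \lambda w(\lambda)\,d\lambda$ are finite, and define \[ val(x)=\int_\Lambda w(\lambda)\Big(\max_{c\in\mathcal{U}(\lambda)} c^t x\Big)\,d\lambda . \] Then there exists $\lambda'\ge 0$ such that every optimal solution of the single robust problem $\min_{x\in\mathcal{X}}\max_{c\in\mathcal{U}(\lambda')}c^tx$ is an optimal solution of $\min_{x\in\mathcal{X}} val(x)$; that is, an optimal solution of the latter problem can be found by solving a single robust problem with ellipsoidal uncertainty.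
   Context: This is the compromise approach to variable-sized (ellipsoidal) uncertainty for min-max robust combinatorial optimization with nominal problem $\min\{c^tx:x\in\mathcal{X}\}$. *)

(* Defs.v *)
From HB Require Import structures.
From mathcomp Require Import all_boot all_order all_algebra.
From mathcomp Require Import all_classical all_reals all_analysis.
Set Implicit Arguments. Unset Strict Implicit. Unset Printing Implicit Defensive.
Import Order.TTheory GRing.Theory Num.Theory.
Local Open Scope classical_set_scope.
Local Open Scope ring_scope.

Definition vec01 (R : realType) (n : nat) (x : {ffun 'I_n -> bool}) : 'cV[R]_n :=
  \col_i (x i)%:R.

Definition dotv (R : realType) (n : nat) (c x : 'cV[R]_n) : R :=
  \sum_(i < n) c i 0 * x i 0.

Definition norm2 (R : realType) (m : nat) (xi : 'cV[R]_m) : R :=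
  Num.sqrt (\sum_(i < m) xi i 0 ^+ 2).

Definition Uset (R : realType) (n m : nat) (hatc : 'cV[R]_n) (C : 'M[R]_(n, m))
  (lam : R) : set 'cV[R]_n :=
  [set hatc + C *m xi | xi in [set xi : 'cV[R]_m | norm2 xi <= lam]].

(* worst-case objective max_{c in U(lambda)} c^t x (as a supremum; the set is
   compact and nonempty for lambda >= 0, so this is the maximum) *)
Definition robval (R : realType) (n m : nat) (hatc : 'cV[R]_n) (C : 'M[R]_(n, m))
  (lam : R) (x : {ffun 'I_n -> bool}) : R :=
  sup [set dotv c (vec01 R x) | c in Uset hatc C lam].

Definition valf (R : realType) (n m : nat) (hatc : 'cV[R]_n) (C : 'M[R]_(n, m))
  (Lam : set R) (w : R -> R) (x : {ffun 'I_n -> bool}) : \bar R :=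
  (\int[@lebesgue_measure R]_(l in Lam) (w l * robval hatc C l x)%:E)%E.

Definition is_opt (T : finType) (d : Order.disp_t) (V : porderType d) (X : {set T}) (f : T -> V) (x : T) : Prop :=
  x \in X /\ forall y, y \in X -> (f x <= f y)%O.

(* Main.v *)
Require Import Defs.
From HB Require Import structures.
From mathcomp Require Import all_boot all_order all_algebra.
From mathcomp Require Import all_classical all_reals all_analysis.
From mathcomp Require Import ring lra.
Import Order.TTheory GRing.Theory Num.Theory.
Local Open Scope classical_set_scope.
Local Open Scope ring_scope.
Section Alg.
Variables (R : realType) (n m : nat) (hatc : 'cV[R]_n) (C : 'M[R]_(n, m)).
Variable (v : 'cV[R]_n).

Definition fx (xi : 'cV[R]_m) : R := dotv (C *m xi) v.

Lemma dotvD (c1 c2 : 'cV[R]_n) : dotv (c1 + c2) v = dotv c1 v + dotv c2 v.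
Proof. by rewrite /dotv -big_split /=; apply: eq_bigr => i _; rewrite mxE mulrDl. Qed.

Lemma fxZ (k : R) xi : fx (k *: xi) = k * fx xi.
Proof.
rewrite /fx /dotv -scalemxAr mulr_sumr; apply: eq_bigr => i _.
by rewrite mxE mulrA.
Qed.

Lemma fx0 : fx 0 = 0.
Proof. by rewrite /fx /dotv mulmx0 big1 // => i _; rewrite mxE mul0r. Qed.

Lemma norm2_ge0 (xi : 'cV[R]_m) : 0 <= norm2 xi.
Proof. exact: sqrtr_ge0. Qed.

Lemma norm2Z (k : R) (xi : 'cV[R]_m) : norm2 (k *: xi) = `|k| * norm2 xi.
Proof.
rewrite /norm2 (eq_bigr (fun i => k ^+ 2 * xi i 0 ^+ 2)); last first.
  by move=> i _; rewrite mxE exprMn.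
by rewrite -mulr_sumr sqrtrM ?sqr_ge0 // sqrtr_sqr.
Qed.

Lemma norm20 : norm2 (0 : 'cV[R]_m) = 0.
Proof. by rewrite -(scale0r (0 : 'cV[R]_m)) norm2Z normr0 mul0r. Qed.

Lemma coord_le_norm2 (xi : 'cV[R]_m) j : `|xi j 0| <= norm2 xi.
Proof.
rewrite /norm2 -sqrtr_sqr; apply: ler_wsqrtr.
rewrite (bigD1 j) //= lerDl; apply: sumr_ge0 => i _; exact: sqr_ge0.
Qed.

Definition Kc : R := \sum_(i < n) \sum_(j < m) `|C i j| * `|v i 0|.

Lemma Kc_ge0 : 0 <= Kc.
Proof. by apply: sumr_ge0 => i _; apply: sumr_ge0 => j _; rewrite mulr_ge0. Qed.

Lemma fx_le xi : fx xi <= Kc * norm2 xi.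
Proof.
apply: le_trans (ler_norm _) _.
rewrite /fx /dotv /Kc mulr_suml.
apply: le_trans (ler_norm_sum _ _ _) _.
apply: ler_sum => i _; rewrite mxE mulr_suml mulr_suml.
apply: le_trans (ler_norm_sum _ _ _) _.
apply: ler_sum => j _; rewrite !normrM [X in _ <= X]mulrAC.
apply: ler_wpM2r => //; apply: ler_wpM2l => //; exact: coord_le_norm2.
Qed.

End Alg.

Arguments fx {R n m}.
Arguments Kc {R n m}.
Arguments dotvD {R n}.
Arguments fxZ {R n m}.
Arguments fx0 {R n m}.
Arguments norm2Z {R m}.
Arguments norm20 {R m}.
Arguments norm2_ge0 {R m}.
Arguments fx_le {R n m}.
Arguments Kc_ge0 {R n m}.

Section Rob.
Variables (R : realType) (n m : nat) (hatc : 'cV[R]_n) (C : 'M[R]_(n, m)).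

Lemma robvalE (l : R) (x : {ffun 'I_n -> bool}) : 0 <= l ->
  robval hatc C l x = dotv hatc (vec01 R x) +
     l * sup [set fx C (vec01 R x) eta | eta in [set eta : 'cV[R]_m | norm2 eta <= 1]].
Proof.
move=> l0.
set v := vec01 R x; set a := dotv hatc v.
set S1 := [set fx C v eta | eta in _].
set b := sup S1.
set Sl := [set dotv c v | c in Uset hatc C l].
have SlP t : Sl t <-> exists xi : 'cV[R]_m, norm2 xi <= l /\ t = a + fx C v xi.
  split.
    by case=> c [xi xil <-] <-; exists xi; split => //; rewrite dotvD.
  by case=> xi [xil ->]; exists (hatc + C *m xi); [exists xi|rewrite dotvD].
have S1ub : ubound S1 (Kc C v).
  move=> t [eta etal <-]; apply: le_trans (fx_le C v eta) _.
  by rewrite -[X in _ <= X]mulr1 ler_wpM2l // Kc_ge0.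
have S1n : S1 !=set0 by exists (fx C v 0); exists 0 => //; rewrite /= norm20.
have S1hub : has_ubound S1 by exists (Kc C v).
have bub : ubound S1 b := ub_le_sup S1hub.
have upper t : Sl t -> t <= a + l * b.
  move=> /SlP [xi [xil ->]]; rewrite lerD2l.
  have [lE|lgt0] := eqVneq l 0.
    rewrite lE mul0r; rewrite lE in xil; apply: le_trans (fx_le C v xi) _.
    have -> : norm2 xi = 0.
      by apply/le_anti/andP; split; [exact: xil|exact: norm2_ge0].
    by rewrite mulr0.
  have lp : 0 < l by rewrite lt_neqAle eq_sym lgt0.
  have -> : xi = l *: (l^-1 *: xi) by rewrite scalerA divff // scale1r.
  rewrite fxZ ler_wpM2l //; apply: bub; exists (l^-1 *: xi) => //=.
  rewrite norm2Z ger0_norm ?invr_ge0 // ler_pdivrMl // mulr1 //.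
have Sln : Sl !=set0.
  by exists (a + fx C v 0); apply/SlP; exists 0; rewrite norm20.
have Slhub : has_ubound Sl by exists (a + l * b).
rewrite /robval -/v -/Sl; apply/le_anti/andP; split.
  exact: ge_sup.
have [->|lgt0] := eqVneq l 0.
  rewrite mul0r; apply: ub_le_sup => //; apply/SlP; exists 0.
  by rewrite norm20 fx0 addr0.
have lp : 0 < l by rewrite lt_neqAle eq_sym lgt0.
rewrite addrC -lerBrDr mulrC -ler_pdivlMr //; apply: ge_sup => //.
move=> t [eta etal <-]; rewrite ler_pdivlMr // lerBrDr addrC mulrC.
rewrite -fxZ; apply: ub_le_sup => //; apply/SlP; exists (l *: eta); split => //.
by rewrite norm2Z ger0_norm // ler_piMr.
Qed.
End Rob.

Theorem theorem2 (R : realType) (n m : nat) (X : {set {ffun 'I_n -> bool}})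
  (hatc : 'cV[R]_n) (C : 'M[R]_(n, m)) (Lam : set R) (w : R -> R) :
  (exists x0, x0 \in X) ->
  measurable Lam ->
  Lam `<=` [set l | 0 <= l] ->
  (forall l, Lam l -> 0 <= w l) ->
  (@lebesgue_measure R).-integrable Lam (fun l => (w l)%:E) ->
  (@lebesgue_measure R).-integrable Lam (fun l => (l * w l)%:E) ->
  exists lam' : R, 0 <= lam' /\
    forall x, is_opt X (robval hatc C lam') x ->
              is_opt X (valf hatc C Lam w) x.
Proof.
move=> _ mL Lge0 wge0 iW iL.
set W := (\int[@lebesgue_measure R]_(l in Lam) (w l)%:E)%E.
set L := (\int[@lebesgue_measure R]_(l in Lam) (l * w l)%:E)%E.
pose a x := dotv hatc (vec01 R x).
pose b x := sup [set fx C (vec01 R x) eta | eta in [set eta : 'cV[R]_m | norm2 eta <= 1]].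
have valE x : valf hatc C Lam w x = ((a x)%:E * W + (b x)%:E * L)%E.
  rewrite /valf; transitivity (\int[@lebesgue_measure R]_(l in Lam)
     ((a x)%:E * (w l)%:E + (b x)%:E * (l * w l)%:E))%E; last first.
    rewrite integralD //; [|exact: integrableZl|exact: integrableZl].
    by rewrite !integralZl.
  apply: eq_integral =>  l /set_mem Ll; rewrite robvalE ?Lge0 // -!EFinM -EFinD; congr (_%:E).
  by rewrite /a /b; ring.
have W0 : (0 <= W)%E by apply: integral_ge0 => l Ll; rewrite lee_fin wge0.
have L0 : (0 <= L)%E.
  by apply: integral_ge0 => l Ll; rewrite lee_fin mulr_ge0 ?wge0 ?Lge0.
have Wf : W \is a fin_num by exact: integrable_fin_num.
have Lf : L \is a fin_num by exact: integrable_fin_num.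
have [Wz|Wnz] := eqVneq (fine W) 0.
  have WE : W = 0%E by rewrite -(fineK Wf) Wz.
  have LE : L = 0%E.
    have ae0 : ae_eq (@lebesgue_measure R) Lam (fun l => (w l)%:E) (cst 0%E).
      apply: (proj1 (ae_eq_integral_abs (@lebesgue_measure R) mL (measurable_int _ iW))).
      rewrite -WE; apply: eq_integral => l /set_mem Ll.
      by rewrite gee0_abs // lee_fin wge0.
    rewrite /L (ae_eq_integral (cst 0%E)) //; first by rewrite integral0.
    - exact: measurable_int iL.
    - move: ae0; apply: filterS => l H Ll.
      by rewrite /= EFinM (H Ll) mule0.
  exists 0; split => // x [xX _]; split => // y yX.
  by rewrite !valE WE LE !mule0 adde0.
have Wp : 0 < fine W by rewrite lt_neqAle eq_sym Wnz fine_ge0.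
exists (fine L / fine W); split.
  by rewrite divr_ge0 // fine_ge0.
have valE2 x : valf hatc C Lam w x = (fine W * robval hatc C (fine L / fine W) x)%:E.
  rewrite valE robvalE ?divr_ge0 ?fine_ge0 // -(fineK Wf) -(fineK Lf) -!EFinM -EFinD.
  congr (_%:E); rewrite /a /b; field.
  by rewrite lt0r_neq0.
move=> x [xX xopt]; split => // y yX.
rewrite !valE2 lee_fin ler_wpM2l ?fine_ge0 //; exact: xopt.
Qed.
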